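(* Let $\Sigma$ be an $(m,n)$-multirate system with harmonic transfer function $\mathcal G$, let $\mathcal A:=\mathcal T_{m\overline n}(A)$, and for $z\in\rho_{m\overline n}(\mathcal A)$ denote by $G_k(z)$ the operator in row $k$ and column $0$ of the $m\times n$ block operator matrix $\mathcal G(z)$. \begin{enumerate} \item With $\epsilon:=e^{2\pi j/(m\overline n)}$, for every $z\in\rho_{m\overline n}(\mathcal A)$ the entry of $\mathcal G(z)$ in row $k$ and column $\ell$ ($0\le k<m$, $0\le \ell<n$) equals $G_{(k-\ell)\bmod m}(z/\epsilon^\ell)$. \item Suppose $\Sigma$ is also $(\widetilde m,\widetilde n)$-multirate, where $\widetilde m=\widetilde c\,\overline m$, $\widetilde n=\widetilde c\,\overline n$ with $q:=c/\widetilde c\in\mathbb Z^+$ (i.e. the operators $A_t,B_t,C_t,D_t$ are $\widetilde m\overline n$-periodic), and let $\widetilde{\mathcal G}$ be the harmonic transfer function of $\Sigma$ regarded as an $(\widetilde m,\widetilde n)$-multirate system, defined on $\rho_{\widetilde m\overline n}(\widetilde{\mathcal A})$ with $\widetilde{\mathcal A}:=\mathcal T_{\widetilde m\overline n}(A)$. Then $\rho_{m\overline n}(\mathcal A)\subset\rho_{\widetilde m\overline n}(\widetilde{\mathcal A})$, and for all $z\in\rho_{m\overline n}(\mathcal A)$ we have $\mathcal G(z)\uparrow_q=\uparrow_q\widetilde{\mathcal G}(z)$ and in particular $\widetilde{\mathcal G}(z)=\downarrow_q\mathcal G(z)\uparrow_q$. \end{enumerate}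
   Context: $j$ is the imaginary unit; $U,X,Y$ are separable complex Hilbert spaces. Upsampler $(\uparrow_q v)_t=v_{t/q}$ if $q\mid t$, else $0$; downsampler $(\downarrow_q v)_t=v_{qt}$; on finite columns $\uparrow_q:V^N\to V^{qN}$ places entries at positions $0,q,2q,\dots$ (zeros elsewhere) and $\downarrow_q:V^{qN}\to V^N$ keeps positions $0,q,2q,\dots$. For $m,n\in\mathbb Z^+$, $c=\gcd(m,n)$, $\overline m=m/c$, $\overline n=n/c$. An $(m,n)$-multirate system consists of $m\overline n$-periodic bounded operator sequences $A_t:X\to X$, $B_t:U\to X$, $C_t:X\to Y$, $D_t:U\to Y$ with equations $x_{t+1}=A_tx_t+B_tu^\circ_t$, $y^\circ_t=C_tx_t+D_tu^\circ_t$, $u^\circ=\uparrow_{\overline m}u$, $y=\downarrow_{\overline n}y^\circ$. For a $T$-periodic sequence $A_t$: $\widehat A_k=\frac1T\sum_{t=0}^{T-1}A_te^{-2\pi jtk/T}$; $\mathcal T_T(A)$ is the $T\times T$ block matrix with entry $\widehat A_{(r-\ell)\bmod T}$ in row $r$, column $\ell$. $\mathcal N_T:=\mathrm{diag}(e^{2\pi jk/T}I)_{k=0}^{T-1}$, $\rho_T(\mathcal A):=\{z: \mathcal N_T-z\mathcal A$ has a bounded inverse$\}$. $\Pi_{T,1,q}:V^T\to V^{qT}$ stacks $q$ copies: $(\Pi_{T,1,q}v)_{t+kT}=v_t$; $\Pi_{T,1,q}^*:V^{qT}\to V^T$, $(\Pi^*_{T,1,q}v)_t=\sum_{k=0}^{q-1}v_{t+kT}$.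 The harmonic transfer function of an $(m,n)$-multirate system is, for $z\in\rho_{m\overline n}(\mathcal T_{m\overline n}(A))$, $\mathcal G(z):=\Pi_{m,1,\overline n}^*\big(z\mathcal C(\mathcal N_{m\overline n}-z\mathcal A)^{-1}\mathcal B+\mathcal D\big)\Pi_{n,1,\overline m}/\overline m:U^n\to Y^m$, where $\mathcal A,\mathcal B,\mathcal C,\mathcal D$ are the Toeplitz transforms with period $m\overline n$ of $A,B,C,D$. For the $(\widetilde m,\widetilde n)$ version, all $m,n$ are replaced by $\widetilde m,\widetilde n$ and the period $m\overline n$ by $\widetilde m\overline n$. *)

(* Defs.v *)
From mathcomp Require Import all_boot all_algebra.
From mathcomp Require Import all_classical all_reals all_analysis.
From mathcomp Require Import complex.
From Stdlib Require Import ClassicalEpsilon.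
Import GRing.Theory Num.Theory.
Local Open Scope ring_scope.
Local Open Scope complex_scope.

Set Implicit Arguments.
Unset Strict Implicit.
Unset Printing Implicit Defensive.

Definition expi {R : realType} (th : R) : R[i] := cos th +i* sin th.

Definition inner_product {R : realType} {V : normedModType R[i]}
  (ip : V -> V -> R[i]) : Prop :=
  (forall (a : R[i]) (x y z : V), ip (a *: x + y) z = a * ip x z + ip y z) /\
  (forall x y : V, ip y x = (ip x y)^*) /\
  (forall x : V, ip x x = `|x| ^+ 2).

Definition separable {R : realType} (V : normedModType R[i]) : Prop :=
  exists d : nat -> V, dense (range d).

Definition bounded_op {R : realType} {V W : normedModType R[i]} (f : V -> W) : Prop :=
  (forall (a : R[i]) (x y : V), f (a *: x + y) = a *: f x + f y) /\
  exists M : R, forall x : V, `|f x| <= M%:C * `|x|.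

(* finite columns V^T are functions 'I_T -> V; a bounded operator V^T -> W^S
   (norm on V^T: sum of the norms of the entries; all such norms are equivalent) *)
Definition bounded_blockop {R : realType} {V W : normedModType R[i]} {T S : nat}
  (F : ('I_T -> V) -> ('I_S -> W)) : Prop :=
  (forall (a : R[i]) (v w : 'I_T -> V),
      F (fun i => a *: v i + w i) = (fun j => a *: F v j + F w j)) /\
  exists M : R, forall (v : 'I_T -> V) (j : 'I_S), `|F v j| <= M%:C * \sum_(i < T) `|v i|.

(* entry i of a column v (0 if i is out of range) *)
Definition vat {V : zmodType} {T : nat} (v : 'I_T -> V) (i : nat) : V :=
  oapp v 0 (insub i : option 'I_T).

Definition periodic {V : Type} (P : nat) (A : nat -> V) : Prop :=
  forall t, A (t + P) = A t.

Definition fourier {R : realType} {V W : normedModType R[i]} (T : nat)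
  (A : nat -> V -> W) (k : nat) : V -> W :=
  fun x => (T%:R)^-1 *: \sum_(t < T) expi (- (2 * pi * (t * k)%:R / T%:R)) *: A t x.

Definition toeplitz {R : realType} {V W : normedModType R[i]} (T : nat)
  (A : nat -> V -> W) : ('I_T -> V) -> ('I_T -> W) :=
  fun v r => \sum_(l < T) fourier T A ((r + T - l) %% T)%N (v l).

Definition pencil {R : realType} {X : normedModType R[i]} (T : nat)
  (Aop : ('I_T -> X) -> ('I_T -> X)) (z : R[i]) : ('I_T -> X) -> ('I_T -> X) :=
  fun v r => expi (2 * pi * (val r)%:R / T%:R) *: v r - z *: Aop v r.

Definition is_bdd_inverse {R : realType} {X : normedModType R[i]} (T : nat)
  (Aop : ('I_T -> X) -> ('I_T -> X)) (z : R[i]) (Rinv : ('I_T -> X) -> ('I_T -> X)) : Prop :=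
  bounded_blockop Rinv /\
  (forall v, pencil Aop z (Rinv v) = v) /\ (forall v, Rinv (pencil Aop z v) = v).

Definition rho {R : realType} {X : normedModType R[i]} (T : nat)
  (Aop : ('I_T -> X) -> ('I_T -> X)) : set R[i] :=
  [set z | exists Rinv, is_bdd_inverse Aop z Rinv].

(* (N_T - z Aop)^{-1} (meaningful for z in rho T Aop, where it is unique) *)
Definition resolvent {R : realType} {X : normedModType R[i]} (T : nat)
  (Aop : ('I_T -> X) -> ('I_T -> X)) (z : R[i]) : ('I_T -> X) -> ('I_T -> X) :=
  epsilon (inhabits (fun v => v)) (is_bdd_inverse Aop z).

(* Pi_{N,1,q} : V^N -> V^{qN} (target size M = qN) *)
Definition Pi_stack {V : zmodType} {N M : nat} (v : 'I_N -> V) : 'I_M -> V :=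
  fun i => vat v (i %% N)%N.

Definition Pi_adj {V : zmodType} {N M : nat} (q : nat) (w : 'I_M -> V) : 'I_N -> V :=
  fun t => \sum_(k < q) vat w (t + k * N)%N.

Definition upsample {V : zmodType} {N M : nat} (q : nat) (v : 'I_N -> V) : 'I_M -> V :=
  fun i => if (q %| i)%N then vat v (i %/ q)%N else 0.

Definition downsample {V : zmodType} {N M : nat} (q : nat) (w : 'I_M -> V) : 'I_N -> V :=
  fun i => vat w (q * i)%N.

Definition delta {V : zmodType} {N : nat} (l : nat) (u : V) : 'I_N -> V :=
  fun i => if val i == l then u else 0.

Definition mbar (m n : nat) : nat := (m %/ gcdn m n)%N.
Definition nbar (m n : nat) : nat := (n %/ gcdn m n)%N.

Definition multirate_system {R : realType} {U X Y : normedModType R[i]} (m n : nat)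
  (A : nat -> X -> X) (B : nat -> U -> X) (C : nat -> X -> Y) (D : nat -> U -> Y) : Prop :=
  (0 < m)%N /\ (0 < n)%N /\
  periodic (m * nbar m n)%N A /\ periodic (m * nbar m n)%N B /\
  periodic (m * nbar m n)%N C /\ periodic (m * nbar m n)%N D /\
  (forall t, bounded_op (A t)) /\ (forall t, bounded_op (B t)) /\
  (forall t, bounded_op (C t)) /\ (forall t, bounded_op (D t)).

Definition HTF {R : realType} {U X Y : normedModType R[i]} (m n : nat)
  (A : nat -> X -> X) (B : nat -> U -> X) (C : nat -> X -> Y) (D : nat -> U -> Y)
  (z : R[i]) (u : 'I_n -> U) : 'I_m -> Y :=
  let P := (m * nbar m n)%N in
  let Pu : 'I_P -> U := Pi_stack u in
  let w : 'I_P -> Y := fun r =>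
    z *: toeplitz C (resolvent (toeplitz A) z (toeplitz B Pu)) r + toeplitz D Pu r in
  fun k => ((mbar m n)%:R)^-1 *: Pi_adj (nbar m n) w k.
Arguments HTF {R U X Y} m n A B C D z u _.

(* Main.v *)
Require Import Defs.
From mathcomp Require Import all_boot all_algebra.
From mathcomp Require Import all_classical all_reals all_analysis.
From mathcomp Require Import complex.
From mathcomp Require Import ring lra zify.
From Stdlib Require Import ClassicalEpsilon.
Import order.Order.TTheory GRing.Theory Num.Theory.
Local Open Scope ring_scope.
Local Open Scope complex_scope.
Set Implicit Arguments.
Unset Strict Implicit.
Unset Printing Implicit Defensive.

Section Sums.
Variable V : zmodType.

Lemma sum_blocks (q N : nat) (g : nat -> V) :
  \sum_(t < q * N) g t = \sum_(s < q) \sum_(t < N) g (s * N + t)%N.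
Proof.
elim: q => [|q IH]; first by rewrite mul0n !big_ord0.
have -> : (q.+1 * N = q * N + N)%N by rewrite mulSnr.
rewrite big_split_ord /= IH big_ord_recr /=; congr (_ + _).
Qed.

Lemma sum_up (q N : nat) (h : nat -> V) : (0 < q)%N ->
  \sum_(i < N * q) (if (q %| i)%N then h i else 0) = \sum_(j < N) h (j * q)%N.
Proof.
case: q => [//|q] _.
rewrite (sum_blocks N q.+1 (fun i => if (q.+1 %| i)%N then h i else 0)).
apply: eq_bigr => s _; rewrite big_ord_recl /= addn0 dvdn_mull // big1 ?addr0 // => i _.
rewrite dvdn_addr ?dvdn_mull //; case: ifP => // /dvdn_leq; rewrite ltn0Sn => /(_ isT).
by rewrite leqNgt /bump /= add1n ltnS ltn_ord.
Qed.

Lemma sum_mod_class (m N k : nat) (g : nat -> V) : (k < m)%N ->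
  \sum_(s < N) g (k + s * m)%N = \sum_(r < N * m) (if (r %% m == k)%N then g r else 0).
Proof.
move=> km; rewrite (sum_blocks N m (fun r => if (r %% m == k)%N then g r else 0)).
apply: eq_bigr => s _.
transitivity (\sum_(t < m) (if (t == k :> nat) then g (s * m + t)%N else 0)).
  by rewrite -big_mkcond (big_ord1_eq _ (fun t : nat => g (s * m + t)%N) k m) km addnC.
by apply: eq_bigr => t _; rewrite modnMDl modn_small.
Qed.

Lemma sum_rot (P a : nat) (h : nat -> V) : (0 < P)%N ->
  \sum_(i < P) h ((i + a) %% P)%N = \sum_(i < P) h i.
Proof.
move=> P0.
pose f : 'I_P -> 'I_P := fun i => Ordinal (ltn_pmod (i + a) P0).
have finj : injective f.
  move=> i j /(congr1 val) /= /eqP; rewrite eqn_modDr => /eqP.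
  by rewrite !modn_small // => /val_inj.
by rewrite [RHS](reindex_inj finj).
Qed.

End Sums.
Section NatL.
Local Open Scope nat_scope.
Lemma modB_congr (P x y x' y' : nat) : y <= x + P -> y' <= x' + P ->
  x = x' %[mod P] -> y = y' %[mod P] -> x + P - y = x' + P - y' %[mod P].
Proof.
move=> h1 h2 hx hy; apply/eqP; rewrite -(eqn_modDr y) subnK //.
have -> : (x' + P - y' + y) %% P = (x' + P - y' + y') %% P by rewrite -modnDmr hy modnDmr.
rewrite subnK //; apply/eqP.
by rewrite -modnDml hx modnDml.
Qed.
Lemma rot_idx (P r l a : nat) : 0 < P -> l < P ->
  ((r + a) %% P + P - (l + a) %% P) %% P = (r + P - l) %% P.
Proof.
move=> P0 lP.
rewrite (@modB_congr P _ _ (r + a) (l + a)) ?modn_mod //.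
- by rewrite -addnA [a + P]addnC addnA subnDr.
- by rewrite (leq_trans (ltnW (ltn_pmod _ P0))) // leq_addl.
- by rewrite addnAC leq_add2r (leq_trans (ltnW lP)) // leq_addl.
Qed.
End NatL.

Section Expi.
Variable R : realType.

Lemma expiD (a b : R) : expi (a + b) = expi a * expi b.
Proof.
rewrite /expi cosD sinD; apply/eqP; rewrite eq_complex /=; apply/andP; split; apply/eqP; ring.
Qed.

Lemma expi0 : expi (0 : R) = 1.
Proof. by rewrite /expi cos0 sin0. Qed.

Lemma expi2pi_nat (k : nat) : expi (2 * pi * k%:R : R) = 1.
Proof.
elim: k => [|k IH]; first by rewrite mulr0 expi0.
rewrite -[k.+1]addn1 natrD mulrDr expiD IH mul1r mulr1 /expi.
by rewrite mulr_natl cos2pi sin2pi.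
Qed.

Lemma expiX (a : R) (k : nat) : expi a ^+ k = expi (a * k%:R).
Proof.
elim: k => [|k IH]; first by rewrite mulr0 expi0 expr0.
by rewrite exprS IH -expiD -[k.+1]addn1 natrD mulrDr mulr1 addrC.
Qed.

Lemma expi_norm (a : R) : `|expi a| = 1.
Proof.
by rewrite normc_def /= cos2Dsin2 sqrtr1.
Qed.

Lemma expi_neq0 (a : R) : expi a != 0.
Proof. by rewrite -normr_eq0 expi_norm oner_eq0. Qed.

Lemma expi_ne1 (th : R) : 0 < th < pi *+ 2 -> expi th != 1.
Proof.
move=> /andP[h1 h2]; apply/eqP => /eqP; rewrite eq_complex /= => /andP[/eqP hc _].
have : 0 < sin (th / 2).
  apply: sin_gt0_pi; apply/andP; split; first by rewrite divr_gt0.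
  by rewrite ltr_pdivrMr // mulr_natr.
have e : th = (th / 2) *+ 2 by rewrite -mulr_natr divfK // pnatr_eq0.
move: hc; rewrite {1}e cos_mulr2n => hc.
have h3 : cos (th / 2) ^+ 2 = 1.
  have : cos (th / 2) ^+ 2 *+ 2 = 1 *+ 2 by rewrite -(subrK 1 (_ *+ 2)) hc.
  by move/eqP; rewrite eqrMn2r /= => /eqP.
move=> hs; have : sin (th / 2) ^+ 2 = 0 by rewrite sin2cos2 h3 subrr.
by move/eqP; rewrite sqrf_eq0 => /eqP h; rewrite h ltxx in hs.
Qed.

Lemma expiN_ne1 (th : R) : 0 < th < pi *+ 2 -> expi (- th) != 1.
Proof.
move=> h; have := expi_ne1 h; apply: contra => /eqP; rewrite /expi cosN sinN.
move/eqP; rewrite !eq_complex /= => /andP[-> /eqP h2]; rewrite andTb.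
by rewrite -(opprK (sin th)) h2 oppr0.
Qed.

Lemma geom_sum0 (w : R[i]) (q : nat) : w ^+ q = 1 -> w != 1 -> \sum_(s < q) w ^+ s = 0.
Proof.
move=> hq hw.
have : (\sum_(s < q) w ^+ s) * (w - 1) = 0.
  rewrite mulrBr mulr1 mulr_suml.
  case: q hq => [|q] hq; first by rewrite !big_ord0 subrr.
  apply/eqP; rewrite subr_eq0; apply/eqP.
  rewrite big_ord_recr /= -exprSr hq big_ord_recl /= expr0 addrC.
  by congr (_ + _); apply: eq_bigr => i _; rewrite -exprSr.
by move/eqP; rewrite mulf_eq0 subr_eq0 (negbTE hw) orbF => /eqP.
Qed.

End Expi.

Section Ops.
Variable R : realType.

Definition linop (V W : normedModType R[i]) (f : V -> W) :=
  forall (a : R[i]) (x y : V), f (a *: x + y) = a *: f x + f y.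

Lemma lin0 (V W : normedModType R[i]) (f : V -> W) : linop f -> f 0 = 0.
Proof.
move=> hf; have h := hf 1 0 0; rewrite !scale1r addr0 in h.
have h2 := congr1 (fun w => w - f 0) h; simpl in h2.
by rewrite addrK subrr in h2; rewrite -h2.
Qed.

Lemma linZ (V W : normedModType R[i]) (f : V -> W) c x : linop f -> f (c *: x) = c *: f x.
Proof. by move=> hf; rewrite -[c *: x]addr0 hf lin0 // addr0. Qed.

Lemma vat_lt (V : zmodType) (T : nat) (v : 'I_T -> V) (i : nat) (h : (i < T)%N) :
  vat v i = v (Ordinal h).
Proof. by rewrite /vat insubT. Qed.

Lemma vat_ord (V : zmodType) (T : nat) (v : 'I_T -> V) (i : 'I_T) : vat v i = v i.
Proof. by rewrite (vat_lt v (ltn_ord i)); congr v; apply: val_inj. Qed.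

Lemma vat_ge (V : zmodType) (T : nat) (v : 'I_T -> V) (i : nat) : (T <= i)%N -> vat v i = 0.
Proof. by move=> h; rewrite /vat insubF // ltnNge h. Qed.

Lemma fourierL (V W : normedModType R[i]) T (A : nat -> V -> W) k :
  (forall t, linop (A t)) -> linop (fourier T A k).
Proof.
move=> hA a x y; rewrite /fourier.
rewrite scalerA [a * _]mulrC -scalerA -scalerDr; congr (_ *: _).
rewrite scaler_sumr -big_split /=; apply: eq_bigr => t _.
by rewrite hA scalerDr !scalerA mulrC.
Qed.

Lemma toeplitzL (V W : normedModType R[i]) T (A : nat -> V -> W) a (v w : 'I_T -> V) :
  (forall t, linop (A t)) ->
  toeplitz A (fun i => a *: v i + w i) = (fun r => a *: toeplitz A v r + toeplitz A w r).
Proof.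
move=> hA; apply: funext => r; rewrite /toeplitz scaler_sumr -big_split /=.
by apply: eq_bigr => l _; rewrite fourierL.
Qed.

Lemma toeplitz0 (V W : normedModType R[i]) T (A : nat -> V -> W) :
  (forall t, linop (A t)) -> toeplitz (T:=T) A (fun _ => 0) = (fun _ => 0).
Proof.
move=> hA; apply: funext => r; rewrite /toeplitz big1 // => l _.
exact: lin0 (fourierL _ _ hA).
Qed.

Lemma toeplitzZ (V W : normedModType R[i]) T (A : nat -> V -> W) c (v : 'I_T -> V) :
  (forall t, linop (A t)) ->
  toeplitz A (fun i => c *: v i) = (fun r => c *: toeplitz A v r).
Proof.
move=> hA; have := toeplitzL c v (fun _ => 0) hA; rewrite toeplitz0 //.
by under eq_fun do rewrite addr0; under [RHS]eq_fun do rewrite addr0.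
Qed.

Definition rot (V : zmodType) (P a : nat) (v : 'I_P -> V) : 'I_P -> V :=
  fun r => vat v ((r + a) %% P)%N.

Lemma toeplitz_rot (V W : normedModType R[i]) P (A : nat -> V -> W) a (v : 'I_P -> V) :
  (0 < P)%N -> toeplitz A (rot a v) = rot a (toeplitz A v).
Proof.
move=> P0; apply: funext => r; rewrite /rot /toeplitz.
rewrite (vat_lt _ (ltn_pmod _ P0)) /=.
pose H := fun l : nat => fourier P A (((r + a) %% P + P - l) %% P)%N (vat v l).
transitivity (\sum_(l < P) H l); last by apply: eq_bigr => l _; rewrite /H vat_ord.
rewrite -(sum_rot a H P0); apply: eq_bigr => l _; rewrite /H rot_idx //.
Qed.

End Ops.

Section Fourier.
Variable R : realType.

Lemma periodic_mul (V : Type) (Pt : nat) (A : nat -> V) s t :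
  Defs.periodic Pt A -> A (s * Pt + t)%N = A t.
Proof.
move=> hA; elim: s => [|s IH]; first by rewrite mul0n add0n.
by rewrite mulSnr -addnA [(Pt + t)%N]addnC addnA hA IH.
Qed.

Lemma expiN2pi_nat (k : nat) : expi (- (2 * pi * k%:R) : R) = 1.
Proof.
have := expiD (2 * pi * k%:R) (- (2 * pi * k%:R) : R).
by rewrite subrr expi0 expi2pi_nat mul1r.
Qed.

Lemma fourier_up (V W : normedModType R[i]) (A : nat -> V -> W) (q Pt P : nat) k x :
  (0 < q)%N -> (0 < Pt)%N -> P = (q * Pt)%N -> Defs.periodic Pt A ->
  fourier P A k x = if (q %| k)%N then fourier Pt A (k %/ q) x else 0.
Proof.
move=> q0 Pt0 hP hA; subst P; rewrite /fourier.
have qR : (q%:R : R) != 0 by rewrite pnatr_eq0 -lt0n.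
have PtR : (Pt%:R : R) != 0 by rewrite pnatr_eq0 -lt0n.
pose w : R[i] := expi (- (2 * pi * k%:R / q%:R)).
pose e1 := fun t : nat => expi (- (2 * pi * (t * k)%:R / (q * Pt)%:R) : R).
rewrite (sum_blocks q Pt (fun t => expi (- (2 * pi * (t * k)%:R / (q * Pt)%:R)) *: A t x)).
transitivity ((q * Pt)%:R^-1 *: \sum_(t < Pt) (\sum_(s < q) w ^+ s) * e1 t *: A t x).
  congr (_ *: _); rewrite exchange_big /=; apply: eq_bigr => t _.
  rewrite mulr_suml scaler_suml; apply: eq_bigr => s _.
  rewrite (periodic_mul s t hA) /w /e1 expiX -expiD; congr (expi _ *: _).
  rewrite !natrM natrD !natrM; field; by rewrite qR PtR.
case: ifP => hk.
  have -> : \sum_(s < q) w ^+ s = q%:R.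
    have -> : w = 1.
      by rewrite /w -(divnK hk) natrM mulrA mulfK // expiN2pi_nat.
    by rewrite (eq_bigr (fun _ => 1)) ?sumr_const ?card_ord // => s _; rewrite expr1n.
  rewrite scaler_sumr [RHS]scaler_sumr; apply: eq_bigr => t _.
  rewrite /e1 !scalerA; congr (_ *: _).
  have -> : (- (2 * pi * (t * k)%:R / (q * Pt)%:R)) = - (2 * pi * (t * (k %/ q))%:R / Pt%:R) :> R.
    rewrite -{1}(divnK hk) !natrM; field; by rewrite qR PtR.
  have qC : (q%:R : R[i]) != 0 by rewrite pnatr_eq0 -lt0n.
  have PtC : (Pt%:R : R[i]) != 0 by rewrite pnatr_eq0 -lt0n.
  rewrite natrM; field; by rewrite qC PtC.
rewrite geom_sum0 ?big1 ?scaler0 //.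
- by move=> i _; rewrite mul0r scale0r.
- by rewrite /w expiX mulNr divfK // expiN2pi_nat.
- rewrite /w {1}(divn_eq k q) natrD natrM.
  have -> : - (2 * pi * ((k %/ q)%:R * q%:R + (k %% q)%:R) / q%:R) =
     - (2 * pi * (k %/ q)%:R) + - (2 * pi * (k %% q)%:R / q%:R) :> R.
    by field.
  rewrite expiD expiN2pi_nat mul1r; apply: expiN_ne1.
  have kq0 : (0 < k %% q)%N by rewrite lt0n -/(dvdn q k) hk.
  apply/andP; split.
    by rewrite divr_gt0 ?mulr_gt0 ?pi_gt0 ?ltr0n ?ltr0Sn.
  have e2 : pi *+ 2 = 2 * pi :> R by rewrite mulr_natl.
  rewrite ltr_pdivrMr ?ltr0n // e2 ltr_pM2l ?mulr_gt0 ?pi_gt0 ?ltr0n //.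
  by rewrite ltr_nat ltn_pmod.
Qed.

End Fourier.

Section NatL2.
Local Open Scope nat_scope.

Lemma dvdn_modP (q P x : nat) : q %| P -> (q %| x %% P) = (q %| x).
Proof. by move=> qP; rewrite {2}(divn_eq x P) dvdn_addr // dvdn_mull. Qed.

Lemma dvd_idx (q P r l : nat) : q %| P -> l <= r + P ->
  ((q %| l) -> (q %| (r + P - l) %% P) = (q %| r)) /\
  ((q %| r) -> (q %| (r + P - l) %% P) = (q %| l)).
Proof.
move=> qP lrP; rewrite dvdn_modP //.
have e : r + P - l + l = r + P by rewrite subnK.
split=> h.
  by rewrite -(dvdn_addl _ h) e dvdn_addl.
apply/idP/idP => h2.
  by rewrite -(dvdn_addr _ h2) e dvdn_addr.
by rewrite -(dvdn_addl _ h2) e dvdn_addr // dvdn_addl.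
Qed.

End NatL2.

Section Cols.
Variable R : realType.
Implicit Types V W : normedModType R[i].

Lemma vatL V T (v w : 'I_T -> V) c j :
  vat (fun i => c *: v i + w i) j = c *: vat v j + vat w j.
Proof.
case: (ltnP j T) => h; first by rewrite !(vat_lt _ h).
by rewrite !vat_ge // scaler0 addr0.
Qed.

Lemma vatZ V T (v : 'I_T -> V) c j : vat (fun i => c *: v i) j = c *: vat v j.
Proof.
case: (ltnP j T) => h; first by rewrite !(vat_lt _ h).
by rewrite !vat_ge // scaler0.
Qed.

Lemma rotL V P a (v w : 'I_P -> V) c :
  rot a (fun i => c *: v i + w i) = (fun r => c *: rot a v r + rot a w r).
Proof. by apply: funext => r; rewrite /rot vatL. Qed.

Lemma rotZ V P a (v : 'I_P -> V) c :
  rot a (fun i => c *: v i) = (fun r => c *: rot a v r).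
Proof. by apply: funext => r; rewrite /rot vatZ. Qed.

Lemma rot_rot V P a b (v : 'I_P -> V) : (0 < P)%N -> rot a (rot b v) = rot (a + b) v.
Proof.
move=> P0; apply: funext => r; rewrite /rot (vat_lt _ (ltn_pmod _ P0)) /=.
by rewrite modnDml addnA.
Qed.

Lemma rotP V P (v : 'I_P -> V) : (0 < P)%N -> rot P v = v.
Proof.
move=> P0; apply: funext => r; rewrite /rot modnDr modn_small ?ltn_ord //.
exact: vat_ord.
Qed.

Lemma sum_norm_rot V P a (v : 'I_P -> V) : (0 < P)%N ->
  \sum_(i < P) `|rot a v i| = \sum_(i < P) `|v i|.
Proof.
move=> P0; rewrite /rot (sum_rot a (fun j => `|vat v j|) P0).
by apply: eq_bigr => i _; rewrite vat_ord.
Qed.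

Definition projq V P q (v : 'I_P -> V) : 'I_P -> V :=
  fun r => if (q %| r)%N then v r else 0.

Lemma upL V N M q (v w : 'I_N -> V) c :
  upsample (M:=M) q (fun i => c *: v i + w i) = (fun r => c *: upsample q v r + upsample q w r).
Proof.
apply: funext => r; rewrite /upsample; case: ifP => _; first by rewrite vatL.
by rewrite scaler0 addr0.
Qed.

Lemma downL V N M q (v w : 'I_M -> V) c :
  downsample (N:=N) q (fun i => c *: v i + w i) = (fun r => c *: downsample q v r + downsample q w r).
Proof. by apply: funext => r; rewrite /downsample vatL. Qed.

Lemma down_up V N M q (v : 'I_N -> V) : (0 < q)%N -> (N * q <= M)%N ->
  downsample q (upsample (M:=M) q v) = v.
Proof.
move=> q0 NM; apply: funext => i; rewrite /downsample.
have h : (q * i < M)%N.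
  by rewrite (leq_trans _ NM) // mulnC ltn_pmul2r.
by rewrite (vat_lt _ h) /upsample /= dvdn_mulr // mulKn // vat_ord.
Qed.

Lemma up_down V N M q (v : 'I_M -> V) : (0 < q)%N -> (M <= N * q)%N ->
  upsample q (downsample (N:=N) q v) = projq q v.
Proof.
move=> q0 MN; apply: funext => r; rewrite /upsample /projq; case: ifP => // h.
have h2 : (r %/ q < N)%N by rewrite ltn_divLR // (leq_trans _ MN) ?ltn_ord.
by rewrite (vat_lt _ h2) /downsample /= mulnC divnK // vat_ord.
Qed.

Lemma sum_norm_up V N M q (v : 'I_N -> V) : (0 < q)%N -> M = (N * q)%N ->
  \sum_(i < M) `|upsample q v i| = \sum_(i < N) `|v i|.
Proof.
move=> q0 hM; subst M.
transitivity (\sum_(i < N * q) (if (q %| i)%N then `|vat v (i %/ q)| else 0)).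
  by apply: eq_bigr => i _; rewrite /upsample; case: ifP => //; rewrite normr0.
rewrite (sum_up N (fun i => `|vat v (i %/ q)|) q0); apply: eq_bigr => i _.
by rewrite mulnK // vat_ord.
Qed.

End Cols.

Section Pencil.
Variable R : realType.
Implicit Types V W X : normedModType R[i].

Lemma res_spec X T (Aop : ('I_T -> X) -> ('I_T -> X)) z :
  rho Aop z -> is_bdd_inverse Aop z (resolvent Aop z).
Proof. by move=> h; apply: epsilon_spec. Qed.

Lemma res_eq X T (Aop : ('I_T -> X) -> ('I_T -> X)) z b x :
  rho Aop z -> pencil Aop z x = b -> resolvent Aop z b = x.
Proof. by move=> /res_spec [_ [_ h]] <-; apply: h. Qed.

Lemma res_pencil X T (Aop : ('I_T -> X) -> ('I_T -> X)) z b :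
  rho Aop z -> pencil Aop z (resolvent Aop z b) = b.
Proof. by move=> /res_spec [_ [h _]]; apply: h. Qed.

Lemma pencilZ X T (A : nat -> X -> X) z c (v : 'I_T -> X) :
  (forall t, linop (A t)) ->
  pencil (toeplitz A) z (fun i => c *: v i) = (fun r => c *: pencil (toeplitz A) z v r).
Proof.
move=> hA; apply: funext => r; rewrite /pencil toeplitzZ //.
by rewrite scalerBr !scalerA mulrC [z * c]mulrC.
Qed.

Lemma expi_modP (P x : nat) : (0 < P)%N ->
  expi (2 * pi * (x %% P)%:R / P%:R : R) = expi (2 * pi * x%:R / P%:R).
Proof.
move=> P0; have PR : (P%:R : R) != 0 by rewrite pnatr_eq0 -lt0n.
rewrite [in RHS](divn_eq x P) natrD natrM.
have -> : 2 * pi * ((x %/ P)%:R * P%:R + (x %% P)%:R) / P%:R =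
  2 * pi * (x %/ P)%:R + 2 * pi * (x %% P)%:R / P%:R :> R by field.
by rewrite expiD expi2pi_nat mul1r.
Qed.

Lemma expi_shift (P r a : nat) : (0 < P)%N ->
  expi (2 * pi * ((r + a) %% P)%:R / P%:R : R) =
  expi (2 * pi / P%:R : R) ^+ a * expi (2 * pi * r%:R / P%:R).
Proof.
move=> P0; have PR : (P%:R : R) != 0 by rewrite pnatr_eq0 -lt0n.
rewrite expi_modP // expiX -expiD natrD; congr expi; field; exact: PR.
Qed.

Lemma pencil_rot X P (A : nat -> X -> X) z a (x : 'I_P -> X) :
  (0 < P)%N -> (forall t, linop (A t)) ->
  (fun r => expi (2 * pi / P%:R : R) ^+ a *:
     pencil (toeplitz A) (z / expi (2 * pi / P%:R : R) ^+ a) (rot a x) r)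
  = rot a (pencil (toeplitz A) z x).
Proof.
move=> P0 hA; apply: funext => r.
set e := expi (2 * pi / P%:R : R) ^+ a.
have e0 : e != 0 by rewrite expf_neq0 // expi_neq0.
rewrite /pencil toeplitz_rot // /rot (vat_lt _ (ltn_pmod _ P0)) /=.
rewrite (vat_lt _ (ltn_pmod _ P0)) /=.
rewrite (vat_lt (fun r0 : 'I_P => expi (2 * pi * r0%:R / P%:R) *: x r0 - z *: toeplitz A x r0) (ltn_pmod _ P0)) /=.
by rewrite expi_shift // -/e scalerBr !scalerA mulrCA divff // mulr1.
Qed.

End Pencil.

Section Part1.
Variable R : realType.
Implicit Types V W X : normedModType R[i].

Lemma rho_rot X P (A : nat -> X -> X) z a :
  (0 < P)%N -> (a <= P)%N -> (forall t, linop (A t)) ->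
  rho (toeplitz (T:=P) A) z -> rho (toeplitz (T:=P) A) (z / expi (2 * pi / P%:R : R) ^+ a).
Proof.
move=> P0 aP hA [Rinv [[RL [M HM]] [h1 h2]]].
set e := expi (2 * pi / P%:R : R) ^+ a.
have e0 : e != 0 by rewrite expf_neq0 // expi_neq0.
have ePa : (a + (P - a) = P)%N by rewrite subnKC.
exists (fun v => rot a (Rinv (fun i => e *: rot (P - a) v i))).
split; [split|split].
- move=> c v w; rewrite rotL.
  have -> : (fun i => e *: (c *: rot (P - a) v i + rot (P - a) w i)) =
            (fun i => c *: (e *: rot (P - a) v i) + e *: rot (P - a) w i).
    by apply: funext => i; rewrite scalerDr !scalerA mulrC.
  by rewrite RL rotL.
- exists M => v j; rewrite /rot (vat_lt _ (ltn_pmod _ P0)).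
  have hs : \sum_(i < P) `|e *: rot (P - a) v i| = \sum_(i < P) `|v i|.
    under eq_bigr do rewrite normrZ normrX expi_norm expr1n mul1r.
    exact: sum_norm_rot.
  by rewrite -hs; apply: HM.
- move=> v; set y := Rinv _.
  have H := pencil_rot z a y P0 hA; rewrite h1 rotZ rot_rot // ePa rotP // in H.
  apply: funext => r; apply: (scalerI e0); exact: (congr1 (fun f => f r) H).
- move=> y.
  have H := pencil_rot z a (rot (P - a) y) P0 hA; rewrite rot_rot // ePa rotP // in H.
  have e2 : (fun i => e *: rot (P - a) (pencil (toeplitz A) (z / e) y) i) =
            rot (P - a) (fun r => e *: pencil (toeplitz A) (z / e) y r) by rewrite rotZ.
  by rewrite e2 H rot_rot // addnC ePa rotP // h2 rot_rot // ePa rotP.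
Qed.

Lemma sum_shift_class V (m N l k : nat) (w : 'I_(m * N) -> V) :
  (0 < m)%N -> (0 < N)%N -> (k < m)%N ->
  \sum_(s < N) vat w (k + s * m)%N =
  \sum_(s < N) vat (rot l w) ((k + m * l - l) %% m + s * m)%N.
Proof.
move=> m0 N0 km.
have P0 : (0 < m * N)%N by rewrite muln_gt0 m0.
rewrite (sum_mod_class N (vat w) km) (sum_mod_class N (vat (rot l w)) (ltn_pmod _ m0)).
rewrite [(N * m)%N]mulnC.
rewrite -(sum_rot l (fun j => if (j %% m == k)%N then vat w j else 0) P0).
apply: eq_bigr => r _; rewrite vat_ord /rot.
rewrite modn_dvdm ?dvdn_mulr //.
have -> : ((r %% m == (k + m * l - l) %% m) = ((r + l) %% m == k))%N.
  have hl : (l <= k + m * l)%N by rewrite (leq_trans (leq_pmull l m0)) // leq_addl.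
  rewrite -(eqn_modDr l) subnK //.
  by rewrite -(modnDmr k (m * l)) modnMr addn0 (modn_small km).
by [].
Qed.

End Part1.

Section Part1b.
Variable R : realType.

Lemma modn_addl_eq (n r l : nat) : (l < n)%N -> ((r + l) %% n == l)%N = ((r %% n)%N == 0%N).
Proof. move=> ln; rewrite -{2}(modn_small ln) -[X in (_ == X %% n)%N]add0n eqn_modDr mod0n //. Qed.

Lemma stack_rot (U : normedModType R[i]) n P (l : 'I_n) (u : U) :
  (0 < n)%N -> (n %| P)%N -> (0 < P)%N ->
  rot l (Pi_stack (M:=P) (delta (N:=n) l u)) = Pi_stack (delta (N:=n) 0 u).
Proof.
move=> n0 nP P0; apply: funext => r.
rewrite /rot (vat_lt _ (ltn_pmod _ P0)) /Pi_stack /=.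
rewrite (vat_lt _ (ltn_pmod _ n0)) (vat_lt _ (ltn_pmod _ n0)) /delta /=.
by rewrite modn_dvdm // modn_addl_eq.
Qed.

Lemma nbar_gt0 m n : (0 < n)%N -> (0 < nbar m n)%N.
Proof.
move=> n0; rewrite /nbar divn_gt0 ?gcdn_gt0 ?n0 ?orbT //; apply: dvdn_leq => //; exact: dvdn_gcdr.
Qed.

Lemma htf_shift (U X Y : normedModType R[i]) m n A B C D z (l : 'I_n) (k : 'I_m) (u : U) :
  (0 < m)%N -> (0 < n)%N -> (n %| m * nbar m n)%N ->
  (forall t, linop (A t : X -> X)) -> (forall t, linop (B t : U -> X)) ->
  (forall t, linop (C t : X -> Y)) -> (forall t, linop (D t : U -> Y)) ->
  rho (toeplitz (T:=(m * nbar m n)%N) A) z ->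
  HTF m n A B C D z (delta l u) k =
  vat (HTF m n A B C D (z / expi (2 * pi / (m * nbar m n)%:R : R) ^+ l) (delta 0 u))
      ((k + m * l - l) %% m).
Proof.
move=> m0 n0 nP hA hB hC hD hz.
have nb0 := nbar_gt0 m n0.
have P0 : (0 < m * nbar m n)%N by rewrite muln_gt0 m0.
have lP : (l <= m * nbar m n)%N by rewrite ltnW // (leq_trans (ltn_ord l)) // dvdn_leq.
set e := expi (2 * pi / (m * nbar m n)%:R : R) ^+ l.
have e0 : e != 0 by rewrite expf_neq0 // expi_neq0.
set x := resolvent (toeplitz (T:=(m * nbar m n)%N) A) z (toeplitz B (Pi_stack (N:=n) (M:=(m * nbar m n)%N) (delta l u))).
have hst := stack_rot l u n0 nP P0.
have hres : resolvent (toeplitz (T:=(m * nbar m n)%N) A) (z / e)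
    (toeplitz B (Pi_stack (N:=n) (M:=(m * nbar m n)%N) (delta 0 u))) = (fun i => e *: rot l x i).
  apply: res_eq; first exact: rho_rot.
  by rewrite pencilZ // pencil_rot // /x res_pencil // -toeplitz_rot // hst.
rewrite /HTF /= (vat_lt _ (ltn_pmod _ m0)) /=; congr (_ *: _); rewrite /Pi_adj.
rewrite hres toeplitzZ // -hst !toeplitz_rot // -/x.
set w := (fun r => z *: toeplitz C x r + toeplitz D (Pi_stack (N:=n) (M:=(m * nbar m n)%N) (delta l u)) r).
have hw : (fun r => z / e *: (e *: rot l (toeplitz C x) r) +
      rot l (toeplitz D (Pi_stack (N:=n) (M:=(m * nbar m n)%N) (delta l u))) r) = rot l w.
  by rewrite /w rotL; apply: funext => r; rewrite scalerA divfK.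
rewrite hw; exact: sum_shift_class.
Qed.

End Part1b.

Section NatL3.
Local Open Scope nat_scope.

Lemma sum_up' (V : zmodType) (q N M : nat) (h : nat -> V) : 0 < q -> M = N * q ->
  (\sum_(i < M) (if (q %| i)%N then h i else 0) = \sum_(j < N) h (j * q)%N)%R.
Proof. by move=> q0 ->; apply: sum_up. Qed.

Lemma idx_div (q Pt P r j : nat) : 0 < q -> q %| r -> P = q * Pt -> j < Pt ->
  ((r + P - j * q) %% P) %/ q = (r %/ q + Pt - j) %% Pt.
Proof.
move=> q0 qr hP jP; rewrite -{1}(divnK qr) hP [q * Pt]mulnC -mulnDl -mulnBl.
by rewrite -muln_modl mulnK.
Qed.

Lemma lt_blk (k m s Nb : nat) : k < m -> s < Nb -> k + s * m < m * Nb.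
Proof.
move=> km sN; apply: (@leq_trans (s.+1 * m)); first by rewrite mulSnr addnC ltn_add2l.
by rewrite mulnC leq_mul2l sN orbT.
Qed.

Lemma div_blk (k m q mt s : nat) : 0 < q -> q %| k -> m = q * mt ->
  (k + s * m) %/ q = k %/ q + s * mt.
Proof. by move=> q0 hq ->; rewrite -{1}(divnK hq) mulnCA [(q * _)%N]mulnC -mulnDl mulnK. Qed.

End NatL3.

Section Part2.
Variable R : realType.
Implicit Types V W X : normedModType R[i].

Lemma toeplitz_up V W (A : nat -> V -> W) q Pt P (v : 'I_Pt -> V) :
  (0 < q)%N -> (0 < Pt)%N -> P = (q * Pt)%N -> Defs.periodic Pt A -> (forall t, linop (A t)) ->
  toeplitz (T:=P) A (upsample (M:=P) q v) = upsample q (toeplitz (T:=Pt) A v).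
Proof.
move=> q0 Pt0 hP hPA hA.
have qP : (q %| P)%N by rewrite hP dvdn_mulr.
have P0 : (0 < P)%N by rewrite hP muln_gt0 q0.
apply: funext => r; rewrite /toeplitz /upsample.
transitivity (\sum_(l < P) (if (q %| l)%N then
    fourier P A ((r + P - l) %% P)%N (vat v (l %/ q)%N) else 0)).
  by apply: eq_bigr => l _; case: ifP => // _; exact: lin0 (fourierL _ _ hA).
rewrite (sum_up' (fun l => fourier P A ((r + P - l) %% P)%N (vat v (l %/ q)%N)) q0
  (_ : P = Pt * q)%N); last by rewrite hP mulnC.
have hl : forall j : 'I_Pt, (j * q <= r + P)%N.
  by move=> j; rewrite (leq_trans _ (leq_addl _ _)) // hP [(q * Pt)%N]mulnC leq_pmul2r // ltnW.
case: ifP => hr.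
  have h : (r %/ q < Pt)%N by rewrite ltn_divLR // -[(Pt * q)%N]mulnC -hP.
  rewrite (vat_lt _ h); apply: eq_bigr => j _.
  rewrite mulnK // vat_ord (fourier_up _ _ q0 Pt0 hP hPA) /=.
  have [_ ->] := dvd_idx qP (hl j); last exact: hr.
  by rewrite dvdn_mull // (idx_div q0 hr hP (ltn_ord j)).
apply: big1 => j _.
rewrite (fourier_up _ _ q0 Pt0 hP hPA).
by have [h1 _] := dvd_idx qP (hl j); rewrite h1 ?dvdn_mull // hr.

Qed.

Lemma toeplitz_proj V W (A : nat -> V -> W) q Pt P (y : 'I_P -> V) :
  (0 < q)%N -> (0 < Pt)%N -> P = (q * Pt)%N -> Defs.periodic Pt A -> (forall t, linop (A t)) ->
  toeplitz (T:=P) A (projq q y) = projq q (toeplitz (T:=P) A y).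
Proof.
move=> q0 Pt0 hP hPA hA.
have qP : (q %| P)%N by rewrite hP dvdn_mulr.
have P0 : (0 < P)%N by rewrite hP muln_gt0 q0.
apply: funext => r; rewrite /toeplitz /projq.
have hl : forall l : 'I_P, (l <= r + P)%N.
  by move=> l; rewrite (leq_trans (ltnW (ltn_ord l))) // leq_addl.
case: ifP => hr.
  apply: eq_bigr => l _; case: ifP => hl2 //.
  rewrite (lin0 (fourierL _ _ hA)) (fourier_up _ _ q0 Pt0 hP hPA).
  by have [_ h2] := dvd_idx qP (hl l); rewrite h2 // hl2.
apply: big1 => l _; case: ifP => hl2; last exact: (lin0 (fourierL _ _ hA)).
rewrite (fourier_up _ _ q0 Pt0 hP hPA).
by have [h1 _] := dvd_idx qP (hl l); rewrite h1 // hr.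
Qed.

Lemma pencil_up X (A : nat -> X -> X) q Pt P z (v : 'I_Pt -> X) :
  (0 < q)%N -> (0 < Pt)%N -> P = (q * Pt)%N -> Defs.periodic Pt A -> (forall t, linop (A t)) ->
  pencil (toeplitz (T:=P) A) z (upsample q v) = upsample q (pencil (toeplitz (T:=Pt) A) z v).
Proof.
move=> q0 Pt0 hP hPA hA.
rewrite /pencil (toeplitz_up _ q0 Pt0 hP hPA hA); apply: funext => r.
rewrite /upsample; case: ifP => hr; last by rewrite !scaler0 subr0.
have h : (r %/ q < Pt)%N by rewrite ltn_divLR // -[(Pt * q)%N]mulnC -hP.
rewrite !(vat_lt _ h) /=; congr (_ *: _ - _).
have qR : (q%:R : R) != 0 by rewrite pnatr_eq0 -lt0n.
have PtR : (Pt%:R : R) != 0 by rewrite pnatr_eq0 -lt0n.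
have er : ((r : nat)%:R : R) = ((r %/ q) * q)%N%:R by rewrite divnK.
have eP : (P%:R : R) = (q * Pt)%N%:R by rewrite hP.
congr expi; rewrite er eP !natrM; field; by rewrite qR PtR.
Qed.

Lemma pencil_proj X (A : nat -> X -> X) q Pt P z (y : 'I_P -> X) :
  (0 < q)%N -> (0 < Pt)%N -> P = (q * Pt)%N -> Defs.periodic Pt A -> (forall t, linop (A t)) ->
  pencil (toeplitz (T:=P) A) z (projq q y) = projq q (pencil (toeplitz (T:=P) A) z y).
Proof.
move=> q0 Pt0 hP hPA hA.
rewrite /pencil (toeplitz_proj _ q0 Pt0 hP hPA hA); apply: funext => r.
by rewrite /projq; case: ifP => // _; rewrite !scaler0 subr0.
Qed.

End Part2.

Section Part2b.
Variable R : realType.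
Implicit Types V W X : normedModType R[i].

Lemma rho_down X (A : nat -> X -> X) q Pt P z :
  (0 < q)%N -> (0 < Pt)%N -> P = (q * Pt)%N -> Defs.periodic Pt A -> (forall t, linop (A t)) ->
  rho (toeplitz (T:=P) A) z -> rho (toeplitz (T:=Pt) A) z.
Proof.
move=> q0 Pt0 hP hPA hA [Rinv [[RL [M HM]] [h1 h2]]].
have hP' : P = (Pt * q)%N by rewrite hP mulnC.
have du : forall v : 'I_Pt -> X, downsample q (upsample (M:=P) q v) = v.
  by move=> v; apply: down_up => //; rewrite hP'.
have ud : forall y : 'I_P -> X, upsample q (downsample (N:=Pt) q y) = projq q y.
  by move=> y; apply: up_down => //; rewrite hP'.
have pu := fun v => pencil_up z v q0 Pt0 hP hPA hA.
have pp := fun y => pencil_proj z y q0 Pt0 hP hPA hA.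
have hproj : forall v : 'I_Pt -> X, projq q (Rinv (upsample (M:=P) q v)) = Rinv (upsample q v).
  move=> v.
  transitivity (Rinv (pencil (toeplitz A) z (projq q (Rinv (upsample (M:=P) q v))))).
    by rewrite h2.
  by rewrite pp h1 -ud du.
exists (fun v => downsample (N:=Pt) q (Rinv (upsample (M:=P) q v))).
split; [split|split].
- by move=> c v w; rewrite upL RL downL.
- exists M => v j; rewrite /downsample.
  have h : (q * j < P)%N by rewrite hP ltn_pmul2l.
  rewrite (vat_lt _ h) -(sum_norm_up v q0 hP'); exact: HM.
- move=> v.
  by rewrite -[LHS]du -pu ud hproj h1 du.
- by move=> v; rewrite -pu h2 du.
Qed.

Lemma res_up X (A : nat -> X -> X) q Pt P z (b : 'I_Pt -> X) :
  (0 < q)%N -> (0 < Pt)%N -> P = (q * Pt)%N -> Defs.periodic Pt A -> (forall t, linop (A t)) ->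
  rho (toeplitz (T:=P) A) z ->
  resolvent (toeplitz (T:=P) A) z (upsample q b) = upsample q (resolvent (toeplitz (T:=Pt) A) z b).
Proof.
move=> q0 Pt0 hP hPA hA hz; apply: res_eq => //.
by rewrite (pencil_up _ _ q0 Pt0 hP hPA hA) res_pencil //; apply: (rho_down q0 Pt0 hP hPA hA hz).
Qed.

Lemma stack_up (U : normedModType R[i]) q n nt Pt P (u : 'I_nt -> U) :
  (0 < q)%N -> (0 < nt)%N -> n = (q * nt)%N -> P = (q * Pt)%N -> (nt %| Pt)%N ->
  Pi_stack (N:=n) (M:=P) (upsample (M:=n) q u) = upsample (M:=P) q (Pi_stack (N:=nt) (M:=Pt) u).
Proof.
move=> q0 nt0 hn hP ntP; apply: funext => r.
have n0 : (0 < n)%N by rewrite hn muln_gt0 q0.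
have qn : (q %| n)%N by rewrite hn dvdn_mulr.
rewrite /Pi_stack /upsample (vat_lt _ (ltn_pmod _ n0)) /= dvdn_modP //.
case: ifP => // hr.
have h : (r %/ q < Pt)%N by rewrite ltn_divLR // mulnC -hP.
rewrite (vat_lt _ h) /= modn_divl; congr vat; congr (_ %/ _)%N; congr (_ %% _)%N.
by rewrite hn mulnC.
Qed.

Lemma adj_up (Y : normedModType R[i]) m mt q Nb P Pt (w : 'I_Pt -> Y) (c : R[i]) :
  (0 < q)%N -> m = (q * mt)%N -> P = (q * Pt)%N -> Pt = (mt * Nb)%N ->
  forall w' : 'I_P -> Y, w' = upsample q w ->
  (fun k : 'I_m => c *: Pi_adj Nb w' k) =
  upsample q (fun k : 'I_mt => c *: Pi_adj Nb w k).
Proof.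
move=> q0 hm hP hPt w' ->; apply: funext => k; rewrite /upsample /Pi_adj.
have qm : (q %| m)%N by rewrite hm dvdn_mulr.
have hk : forall s : 'I_Nb, (k + s * m < P)%N.
  by move=> s; rewrite hP hPt mulnA -hm lt_blk.
case: ifP => hq.
  have h : (k %/ q < mt)%N by rewrite ltn_divLR // mulnC -hm.
  rewrite (vat_lt _ h) /=; congr (_ *: _); apply: eq_bigr => s _.
  rewrite (vat_lt _ (hk s)) /= dvdn_addr ?hq ?dvdn_mull //.
  congr vat; exact: div_blk.
rewrite big1 ?scaler0 // => s _.
by rewrite (vat_lt _ (hk s)) /= dvdn_addl ?hq // dvdn_mull.
Qed.

End Part2b.

Section Part2c.
Variable R : realType.

Lemma htf_up (U X Y : normedModType R[i]) m n mt nt q A B C D z (u : 'I_nt -> U) :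
  (0 < q)%N -> (0 < mt)%N -> (0 < nt)%N -> m = (q * mt)%N -> n = (q * nt)%N ->
  mbar mt nt = mbar m n -> nbar mt nt = nbar m n -> (nt %| mt * nbar m n)%N ->
  Defs.periodic (mt * nbar m n) A -> Defs.periodic (mt * nbar m n) B ->
  Defs.periodic (mt * nbar m n) C -> Defs.periodic (mt * nbar m n) D ->
  (forall t, linop (A t : X -> X)) -> (forall t, linop (B t : U -> X)) ->
  (forall t, linop (C t : X -> Y)) -> (forall t, linop (D t : U -> Y)) ->
  rho (toeplitz (T:=(m * nbar m n)%N) A) z ->
  HTF m n A B C D z (upsample q u) = upsample q (HTF mt nt A B C D z u).
Proof.
move=> q0 mt0 nt0 hm hn hb1 hb2 ntP hpA hpB hpC hpD hA hB hC hD hz.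
have n0 : (0 < n)%N by rewrite hn muln_gt0 q0.
have nb0 := nbar_gt0 m n0.
have Pt0 : (0 < mt * nbar m n)%N by rewrite muln_gt0 mt0.
have hP : (m * nbar m n = q * (mt * nbar m n))%N by rewrite hm mulnA.
rewrite /HTF hb1 hb2 /=.
apply: (adj_up _ q0 hm hP (erefl _)).
rewrite (stack_up u q0 nt0 hn hP ntP) (toeplitz_up _ q0 Pt0 hP hpB hB).
rewrite (res_up _ q0 Pt0 hP hpA hA hz) (toeplitz_up _ q0 Pt0 hP hpC hC).
by rewrite (toeplitz_up _ q0 Pt0 hP hpD hD) upL.
Qed.

End Part2c.

Unset Implicit Arguments.

Theorem theorem8 (R : realType) (U X Y : completeNormedModType R[i])
  (ipU : U -> U -> R[i]) (ipX : X -> X -> R[i]) (ipY : Y -> Y -> R[i])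
  (hU : inner_product ipU) (hX : inner_product ipX) (hY : inner_product ipY)
  (sU : separable U) (sX : separable X) (sY : separable Y)
  (m n : nat) (A : nat -> X -> X) (B : nat -> U -> X) (C : nat -> X -> Y) (D : nat -> U -> Y) :
  multirate_system m n A B C D ->
  let P := (m * nbar m n)%N in
  let eps : R[i] := expi (2 * pi / P%:R) in
  (* part 1 *)
  (forall z : R[i], rho (toeplitz (T:=P) A) z ->
     forall (k : 'I_m) (l : 'I_n) (u : U),
       rho (toeplitz (T:=P) A) (z / eps ^+ l) /\
       HTF m n A B C D z (delta l u) k
         = vat (HTF m n A B C D (z / eps ^+ l) (delta 0 u)) ((k + m * l - l) %% m)) /\
  (* part 2 *)
  (forall ct : nat, (0 < ct)%N -> (ct %| gcdn m n)%N ->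
     let mt := (ct * mbar m n)%N in
     let nt := (ct * nbar m n)%N in
     let q := (gcdn m n %/ ct)%N in
     multirate_system mt nt A B C D ->
     (forall z : R[i], rho (toeplitz (T:=P) A) z -> rho (toeplitz (T:=(mt * nbar m n)%N) A) z) /\
     (forall z : R[i], rho (toeplitz (T:=P) A) z ->
        (forall u : 'I_nt -> U,
           HTF m n A B C D z (upsample q u) = upsample q (HTF mt nt A B C D z u)) /\
        (forall u : 'I_nt -> U,
           HTF mt nt A B C D z u = downsample q (HTF m n A B C D z (upsample q u))))).
Proof.
move=> [m0 [n0 [pA [pB [pC [pD [bA [bB [bC bD]]]]]]]]] P eps.
have hA : forall t, linop (A t) by move=> t; case: (bA t).
have hB : forall t, linop (B t) by move=> t; case: (bB t).
have hC : forall t, linop (C t) by move=> t; case: (bC t).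
have hD : forall t, linop (D t) by move=> t; case: (bD t).
have nb0 := nbar_gt0 m n0.
have P0 : (0 < P)%N by rewrite /P muln_gt0 m0.
have c0 : (0 < gcdn m n)%N by rewrite gcdn_gt0 m0.
have cm : (gcdn m n %| m)%N := dvdn_gcdl m n.
have cn : (gcdn m n %| n)%N := dvdn_gcdr m n.
have nP : (n %| P)%N.
  by rewrite /P /nbar muln_divA // -divn_mulAC // dvdn_mull.
split.
  move=> z hz k l u; split.
    apply: rho_rot => //; rewrite ltnW // (leq_trans (ltn_ord l)) // dvdn_leq //.
  exact: htf_shift.
move=> ct ct0 ctc mt nt q [mt0 [nt0 [pA' [pB' [pC' [pD' _]]]]]].
have hc : gcdn m n = (q * ct)%N by rewrite /q divnK.
have q0 : (0 < q)%N by move: c0; rewrite hc muln_gt0 => /andP[].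
have hm : m = (q * mt)%N by rewrite /mt mulnA -hc /mbar mulnC divnK.
have hn : n = (q * nt)%N by rewrite /nt mulnA -hc /nbar mulnC divnK.
have g1 : gcdn (mbar m n) (nbar m n) = 1%N.
  apply/eqP; rewrite -(eqn_pmul2l c0) muln1 muln_gcdr /mbar /nbar.
  by rewrite !(mulnC (gcdn m n)) !divnK.
have gt : gcdn mt nt = ct by rewrite /mt /nt -muln_gcdr g1 muln1.
have hb1 : mbar mt nt = mbar m n by rewrite /mbar gt /mt mulKn.
have hb2 : nbar mt nt = nbar m n by rewrite /nbar gt /nt mulKn.
rewrite hb2 in pA' pB' pC' pD'.
have Pt0 : (0 < mt * nbar m n)%N by rewrite muln_gt0 mt0.
have hP : P = (q * (mt * nbar m n))%N by rewrite /P hm mulnA.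
have ntP : (nt %| mt * nbar m n)%N by rewrite /mt /nt -mulnA mulnCA dvdn_mull.
split.
  by move=> z hz; apply: (rho_down q0 Pt0 hP pA' hA hz).
move=> z hz.
have H := fun u => htf_up u q0 mt0 nt0 hm hn hb1 hb2 ntP pA' pB' pC' pD' hA hB hC hD hz.
split => u; first exact: H.
by rewrite H down_up // hm mulnC.
Qed.
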